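(* Let $f:\mathbb{R}^n\to\mathbb{R}$ be differentiable with $\nabla f$ $L$-Lipschitz continuous ($L>0$), let $\beta\in[0,1]$, $h=\frac{0.9}{L}$, and let $x\in\mathbb{R}^n$ with $\nabla f(x)\neq0$. Put $z=x-h\nabla f(x)$ and $$\alpha=\frac{(1-\beta)\left(1-\frac{Lh}{4}\right)\|x-z\|^2+\beta\langle x-z,h\nabla f(z)\rangle}{h^2\|\nabla f(x)-\beta(\nabla f(x)-\nabla f(z))\|^2}.$$ Then the denominator is nonzero and $\alpha>\frac12$; consequently $\eta:=1/\alpha\in(0,2)$ and $x-\eta\alpha h\big(\nabla f(x)-\beta(\nabla f(x)-\nabla f(z))\big)=x-h\big(\nabla f(x)-\beta(\nabla f(x)-\nabla f(z))\big)$. *)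

(* Defs.v *)
From HB Require Import structures.
From mathcomp Require Import all_boot all_order all_algebra.
From mathcomp Require Import all_classical all_reals all_analysis.
Set Implicit Arguments. Unset Strict Implicit. Unset Printing Implicit Defensive.
Import Order.TTheory GRing.Theory Num.Theory.
Import numFieldNormedType.Exports.
Local Open Scope ring_scope.

Definition dotp {R : realType} {n : nat} (u v : 'rV[R]_n) : R :=
  \sum_(i < n) u ord0 i * v ord0 i.

Definition enorm {R : realType} {n : nat} (u : 'rV[R]_n) : R :=
  Num.sqrt (dotp u u).

Definition is_gradient {R : realType} {n : nat}
  (f : 'rV[R]_n -> R) (g : 'rV[R]_n -> 'rV[R]_n) : Prop :=
  forall x, differentiable f x /\ forall v, 'd f x v = dotp (g x) v.

Definition lipschitz_eucl {R : realType} {n : nat}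
  (L : R) (g : 'rV[R]_n -> 'rV[R]_n) : Prop :=
  forall x y, enorm (g x - g y) <= L * enorm (x - y).

(* Main.v *)
Require Import Defs.
From HB Require Import structures.
From mathcomp Require Import all_boot all_order all_algebra.
From mathcomp Require Import all_classical all_reals all_analysis.
From mathcomp Require Import ring lra.
Import Order.TTheory GRing.Theory Num.Theory.
Import numFieldNormedType.Exports.
Local Open Scope ring_scope.

Section S.
Variables (R : realType) (n : nat).
Implicit Types u v w : 'rV[R]_n.

Lemma dotpC u v : dotp u v = dotp v u.
Proof. by rewrite /dotp; apply: eq_bigr => i _; rewrite mulrC. Qed.
Lemma dotpDl u v w : dotp (u + v) w = dotp u w + dotp v w.
Proof. by rewrite /dotp -big_split; apply: eq_bigr => i _; rewrite mxE mulrDl. Qed.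
Lemma dotpZl k u w : dotp (k *: u) w = k * dotp u w.
Proof. by rewrite /dotp mulr_sumr; apply: eq_bigr => i _; rewrite mxE mulrA. Qed.
Lemma dotpDr u v w : dotp w (u + v) = dotp w u + dotp w v.
Proof. by rewrite dotpC dotpDl !(dotpC w). Qed.
Lemma dotpZr k u w : dotp w (k *: u) = k * dotp w u.
Proof. by rewrite dotpC dotpZl dotpC. Qed.
Lemma dotpNl u w : dotp (- u) w = - dotp u w.
Proof. by rewrite -scaleN1r dotpZl mulN1r. Qed.
Lemma dotpNr u w : dotp w (- u) = - dotp w u.
Proof. by rewrite dotpC dotpNl dotpC. Qed.
Lemma dotp_ge0 u : 0 <= dotp u u.
Proof. by apply: sumr_ge0 => i _; rewrite -expr2 sqr_ge0. Qed.
Lemma dotp_eq0 u : dotp u u = 0 -> u = 0.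
Proof.
move=> /eqP; rewrite psumr_eq0; last by move=> i _; rewrite -expr2 sqr_ge0.
move=> /allP H; apply/rowP => i; rewrite mxE.
have := H i (mem_index_enum _); rewrite /= mulf_eq0 orbb => /eqP ->.
done.
Qed.
Lemma enorm_sq u : enorm u ^+ 2 = dotp u u.
Proof. by rewrite /enorm sqr_sqrtr // dotp_ge0. Qed.
Lemma dotp_lin p q u v : dotp (p *: u + q *: v) (p *: u + q *: v) =
  p ^+ 2 * dotp u u + 2 * p * q * dotp u v + q ^+ 2 * dotp v v.
Proof. rewrite !(dotpDl, dotpDr, dotpZl, dotpZr) (dotpC v u); ring. Qed.
End S.

Theorem mainTheorem14 (R : realType) (n : nat) (f : 'rV[R]_n -> R)
  (g : 'rV[R]_n -> 'rV[R]_n) (L beta : R) (x : 'rV[R]_n) :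
  is_gradient f g -> 0 < L -> lipschitz_eucl L g ->
  0 <= beta <= 1 -> g x != 0 ->
  let h := (9 / 10) / L in
  let z := x - h *: g x in
  let d := g x - beta *: (g x - g z) in
  let den := h ^+ 2 * enorm d ^+ 2 in
  let alpha := ((1 - beta) * (1 - L * h / 4) * enorm (x - z) ^+ 2
                + beta * dotp (x - z) (h *: g z)) / den in
  let eta := alpha^-1 in
  [/\ den != 0, 1 / 2 < alpha, 0 < eta < 2 &
      x - (eta * alpha * h) *: d = x - h *: d].
Proof.
move=> _ L0 Lip /andP[b0 b1] gx0 h z d den alpha eta.
have Lh : L * h = 9 / 10 by rewrite /h; field; rewrite gt_eqF.
have h0 : 0 < h by rewrite /h divr_gt0.
have xz : x - z = h *: g x by rewrite /z opprB addrC subrK.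
set A := dotp (g x) (g x).
set B := dotp (g x) (g z).
set C := dotp (g z) (g z).
have A0 : 0 < A.
  rewrite lt_def dotp_ge0 andbT; apply/eqP => /dotp_eq0 H.
  by rewrite H eqxx in gx0.
have Lip2 : A - 2 * B + C <= 81 / 100 * A.
  have H := Lip x z.
  have e1 : enorm (g x - g z) ^+ 2 = A - 2 * B + C.
    rewrite enorm_sq !(dotpDl, dotpDr) !(dotpNl, dotpNr) (dotpC _ _ (g z)) -/A -/B -/C.
    ring.
  have e2 : enorm (x - z) ^+ 2 = h ^+ 2 * A.
    by rewrite xz enorm_sq dotpZl dotpZr mulrA -expr2.
  have : enorm (g x - g z) ^+ 2 <= (L * enorm (x - z)) ^+ 2.
    by rewrite !expr2 ler_pM // /enorm sqrtr_ge0.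
  rewrite e1 exprMn e2 mulrA -exprMn Lh => H2.
  have e3 : ((9/10 : R) ^+ 2) = 81/100 by field.
  by rewrite -e3.
have eE : dotp (g x - g z) (g x - g z) = A - 2 * B + C.
  rewrite !(dotpDl, dotpDr) !(dotpNl, dotpNr) (dotpC _ _ (g z)) -/A -/B -/C.
  ring.
have dE : d = (1 - beta) *: g x + beta *: g z.
  by apply/rowP => i; rewrite /d !mxE; ring.
have DE : enorm d ^+ 2 = (1 - beta) ^+ 2 * A + 2 * (1 - beta) * beta * B + beta ^+ 2 * C.
  by rewrite enorm_sq dE dotp_lin.
have D0 : 0 < enorm d ^+ 2.
  rewrite lt_def enorm_sq dotp_ge0 andbT; apply/eqP => /dotp_eq0 H.
  have : g x = beta *: (g x - g z) by apply/eqP; rewrite -subr_eq0; apply/eqP; exact: H.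
  move=> H1.
  have : A = beta ^+ 2 * (A - 2 * B + C).
    by rewrite /A {1 2}H1 dotpZl dotpZr eE mulrA -expr2.
  move=> H2.
  have : beta ^+ 2 <= 1 by rewrite expr_le1.
  move=> H3.
  nra.
have e2 : enorm (x - z) ^+ 2 = h ^+ 2 * A.
  by rewrite xz enorm_sq dotpZl dotpZr mulrA -expr2.
have e4 : dotp (x - z) (h *: g z) = h ^+ 2 * B.
  by rewrite xz dotpZl dotpZr mulrA -expr2.
have den0 : 0 < den by rewrite /den mulr_gt0 // exprn_gt0.
have al : 1 / 2 < alpha.
  rewrite /alpha ltr_pdivlMr // e2 e4 Lh /den DE.
  have h2 : 0 < h ^+ 2 by rewrite exprn_gt0.
  have K : (1 - beta) ^+ 2 * A + 2 * (1 - beta) * beta * B + beta ^+ 2 * C <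
     2 * ((1 - beta) * (1 - 9 / 10 / 4) * A + beta * B).
    have P1 : 0 <= beta ^+ 2 * (81 / 100 * A - (A - 2 * B + C)).
      by rewrite mulr_ge0 ?sqr_ge0 // subr_ge0.
    have P2 : 0 < (1 - beta) * (11/20 + beta) * A + 19/100 * beta ^+ 2 * A.
      have Q : 0 <= (1 - beta) * (11/20 + beta) by rewrite mulr_ge0 // ?subr_ge0 //; lra.
      nra.
    nra.
  nra.
have al0 : 0 < alpha by apply: lt_trans al; lra.
split.
- by rewrite gt_eqF.
- exact: al.
- rewrite /eta invr_gt0 al0 /=.
  rewrite -[2]invrK ltf_pV2 ?posrE //; last lra.
- by rewrite /eta mulVf ?gt_eqF // mul1r.
Qed.
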